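(* Let $p$ be a full-support skill distribution, and let $q_I,q_J$ be full-support perceptions. Let $\langle S_I,\pi_I\rangle$ and $\langle S_J,\pi_J\rangle$ be signal structures. Assume: - $\langle S_I,\pi_I\rangle$ is MLR; - $p\succsim_{LR}q_J$; - $q_I\succsim_{LR}q_J$; - $\langle S_I,\pi_I\rangle\succsim_G\langle S_J,\pi_J\rangle$. Then for every monotone firm $A\subset\mathcal{A}_M$, $$W_A(p,q_I,\langle S_I,\pi_I\rangle)\ \ge\ W_A(p,q_J,\langle S_J,\pi_J\rangle).$$
   Context: Let $\Theta\subset\mathbb{R}$ be a finite set of skill types with $|\Theta|\ge2$. Tasks are vectors $a\in\mathcal{A}:=\mathbb{R}^\Theta$. A firm is a non-empty finite set $A\subset\mathcal{A}$. It is monotone if $A\subset\mathcal{A}_M:=\{a: a(\theta')>a(\theta)\text{ whenever }\theta'>\theta\}$. A signal structure $\langle S,\pi\rangle$ consists of a non-empty finite set $S$ and a map $\pi:S\times\Theta\to[0,1]$ with $\sum_s\pi(s|\theta)=1$, such that each $s$ has $\pi(s|\theta)>0$ for some $\theta$. Pay: - $p,q\in\Delta(\Theta)$ have full support. - $q_{\langle S,\pi\rangle}(\theta|s):=q(\theta)\pi(s|\theta)/\sum_{\theta'}q(\theta')\pi(s|\theta')$. - $w_A(s,q,\langle S,\pi\rangle):=\max_{a\in A}\sum_\theta q_{\langle S,\pi\rangle}(\theta|s)a(\theta)$. - $W_A(p,q,\langle S,\pi\rangle):=\sum_\theta p(\theta)\sum_s\pi(s|\theta)w_A(s,q,\langle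 S,\pi\rangle)$. Orders: - $q'\succsim_{LR}q$ means $q(\theta)q'(\theta')\ge q(\theta')q'(\theta)$ whenever $\theta'>\theta$. - $\langle S',\pi'\rangle\succsim_G\langle S,\pi\rangle$ means there exists $g:S\times S'\to[0,1]$ with $\sum_s g(s|s')=1$ for each $s'$ and $\pi(s|\theta)=\sum_{s'}g(s|s')\pi'(s'|\theta)$ for all $s,\theta$. - $\langle S,\pi\rangle$ is MLR if $S\subset\mathbb{R}$ and $\pi(s|\theta)\pi(s'|\theta')\ge\pi(s|\theta')\pi(s'|\theta)$ whenever $s'>s$, $\theta'>\theta$. *)

(* Defs.v *)
From HB Require Import structures.
From mathcomp Require Import all_boot all_order all_algebra.
From mathcomp Require Import finmap.
From mathcomp Require Import reals.
Set Implicit Arguments. Unset Strict Implicit. Unset Printing Implicit Defensive.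
Import Order.TTheory GRing.Theory Num.Theory.
Local Open Scope ring_scope.
Local Open Scope fset_scope.

(* Skill types: a finite type T together with an injective labelling
   th : T -> R, so that Theta = image of th is a finite subset of R and
   the order on types is the order of their labels. *)

Section Defs.
Variable R : realType.
Variables (T : finType) (th : T -> R).

Definition full_support_dist (p : T -> R) : Prop :=
  (forall t, 0 < p t) /\ \sum_(t : T) p t = 1.

Definition signal_structure (S : finType) (pi : S -> T -> R) : Prop :=
  (0 < #|S|)%N /\
  (forall s t, 0 <= pi s t <= 1) /\
  (forall t, \sum_(s : S) pi s t = 1) /\
  (forall s, exists t, 0 < pi s t).

Definition posterior (S : finType) (q : T -> R) (pi : S -> T -> R)
    (s : S) (t : T) : R :=
  q t * pi s t / \sum_(t' : T) q t' * pi s t'.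

Definition post_val (S : finType) (q : T -> R) (pi : S -> T -> R)
    (s : S) (a : {ffun T -> R}) : R :=
  \sum_(t : T) posterior q pi s t * a t.

Definition wage (A : {fset {ffun T -> R}}) (S : finType) (q : T -> R)
    (pi : S -> T -> R) (s : S) : R :=
  \big[Num.max/post_val q pi s (head [ffun=> 0] (enum_fset A))]_(a <- enum_fset A)
     post_val q pi s a.

Definition Wpay (A : {fset {ffun T -> R}}) (p q : T -> R) (S : finType)
    (pi : S -> T -> R) : R :=
  \sum_(t : T) p t * \sum_(s : S) pi s t * wage A q pi s.

Definition monotone_task (a : {ffun T -> R}) : Prop :=
  forall t t', th t < th t' -> a t < a t'.

Definition LR_ge (q' q : T -> R) : Prop :=
  forall t t', th t < th t' -> q t * q' t' >= q t' * q' t.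

Definition garbling_ge (S' : finType) (pi' : S' -> T -> R)
    (S : finType) (pi : S -> T -> R) : Prop :=
  exists g : S -> S' -> R,
    (forall s s', 0 <= g s s' <= 1) /\
    (forall s', \sum_(s : S) g s s' = 1) /\
    (forall s t, pi s t = \sum_(s' : S') g s s' * pi' s' t).

Definition MLR (S : finType) (sl : S -> R) (pi : S -> T -> R) : Prop :=
  injective sl /\
  forall s s' t t', sl s < sl s' -> th t < th t' ->
    pi s t * pi s' t' >= pi s t' * pi s' t.

End Defs.

(* Main.v *)
Require Import Defs.
From HB Require Import structures.
From mathcomp Require Import all_boot all_order all_algebra.
From mathcomp Require Import finmap.
From mathcomp Require Import reals.
From mathcomp Require Import ring lra.
Import Order.TTheory GRing.Theory Num.Theory.
Local Open Scope ring_scope.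
Local Open Scope fset_scope.

Local Close Scope fset_scope.
Set Implicit Arguments. Unset Strict Implicit.
Section Aux.
Variable R : realType.

Lemma symsum (X : finType) (k : X -> R) (kinj : injective k) (F : X -> X -> R) :
  (forall x, 0 <= F x x) -> (forall x y, k x < k y -> 0 <= F x y + F y x) ->
  0 <= \sum_x \sum_y F x y.
Proof.
move=> H0 H.
have : 0 <= \sum_x \sum_y (F x y + F y x).
  apply: sumr_ge0 => x _; apply: sumr_ge0 => y _.
  case: (ltgtP (k x) (k y)) => hxy; first exact: H.
  - by rewrite addrC; apply: H.
  - by rewrite (kinj _ _ hxy); apply: addr_ge0.
rewrite (eq_bigr (fun x => \sum_y F x y + \sum_y F y x)); last first.
  by move=> x _; rewrite big_split.
rewrite big_split /= [X in _ + X]exchange_big /= => h; lra.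
Qed.

Lemma LR_sum (X : finType) (k : X -> R) (kinj : injective k) (mu nu f : X -> R) :
  (forall x y, k x < k y -> nu x * mu y <= mu x * nu y) ->
  (forall x y, k x < k y -> f x <= f y) ->
  (\sum_x nu x) * (\sum_x mu x * f x) <= (\sum_x mu x) * (\sum_x nu x * f x).
Proof.
move=> Hl Hf.
have := @symsum X k kinj (fun x y => mu x * (nu y * f y) - nu y * (mu x * f x)).
have E : \sum_x \sum_y (mu x * (nu y * f y) - nu y * (mu x * f x)) =
   (\sum_x mu x) * (\sum_x nu x * f x) - (\sum_x nu x) * (\sum_x mu x * f x).
  rewrite !big_distrlr /= [X in _ - X]exchange_big /= -sumrB.
  by apply: eq_bigr => x _; rewrite sumrB.
rewrite E => h; rewrite -subr_ge0; apply: h.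
  by move=> x; rewrite subr_ge0 mulrCA.
move=> x y hxy.
have -> : mu x * (nu y * f y) - nu y * (mu x * f x) + (mu y * (nu x * f x) - nu x * (mu y * f y))
   = (f y - f x) * (mu x * nu y - nu x * mu y) by ring.
by apply: mulr_ge0; rewrite subr_ge0; [apply: Hf | apply: Hl].
Qed.

Lemma ratio_le (X : finType) (k : X -> R) (kinj : injective k) (mu nu f : X -> R) :
  (forall x y, k x < k y -> nu x * mu y <= mu x * nu y) ->
  (forall x y, k x < k y -> f x <= f y) ->
  0 < \sum_x mu x -> 0 < \sum_x nu x ->
  (\sum_x mu x * f x) / (\sum_x mu x) <= (\sum_x nu x * f x) / (\sum_x nu x).
Proof.
move=> Hl Hf hm hn.
have := LR_sum kinj Hl Hf.
rewrite ler_pdivrMr // mulrAC ler_pdivlMr // => h.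
by rewrite mulrC [X in _ <= X]mulrC.
Qed.

Lemma bigmax_ge (I : eqType) (r : seq I) (x0 : R) (F : I -> R) i :
  i \in r -> F i <= \big[Num.max/x0]_(j <- r) F j.
Proof.
elim: r => [//|j r IH]; rewrite in_cons big_cons le_max => /orP[/eqP->|hi].
  by rewrite lexx.
by rewrite IH ?orbT.
Qed.

Lemma bigmax_attain (I : eqType) (r : seq I) (x0 : R) (F : I -> R) :
  \big[Num.max/x0]_(j <- r) F j = x0 \/
  exists2 i, i \in r & \big[Num.max/x0]_(j <- r) F j = F i.
Proof.
elim: r => [|j r IH]; first by left; rewrite big_nil.
rewrite big_cons maxEle; case: ifP => _.
  case: IH => [->|[i hi ->]]; first by left.
  by right; exists i; rewrite // in_cons hi orbT.
by right; exists j; rewrite ?mem_head.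
Qed.

Variables (T : finType) (th : T -> R).

Lemma wage_ge (A : {fset {ffun T -> R}}) (S : finType) q (pi : S -> T -> R) s a :
  a \in A -> post_val q pi s a <= wage A q pi s.
Proof. by move=> ha; apply: bigmax_ge. Qed.

Lemma wage_attain (A : {fset {ffun T -> R}}) (S : finType) q (pi : S -> T -> R) s :
  A != fset0 -> exists2 a, a \in A & wage A q pi s = post_val q pi s a.
Proof.
move=> /fset0Pn [x hx].
rewrite /wage; case: (bigmax_attain (enum_fset A)
   (post_val q pi s (head [ffun=> 0] (enum_fset A))) (post_val q pi s)).
  move=> ->; exists (head [ffun=> 0] (enum_fset A)) => //.
  have hx' : x \in enum_fset A by [].
  case E: (enum_fset A) hx' => [|y l] //= _.
  by change (y \in enum_fset A); rewrite E mem_head.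
by case=> i hi ->; exists i.
Qed.

Lemma den_pos (S : finType) (q : T -> R) (pi : S -> T -> R) s :
  signal_structure pi -> (forall t, 0 < q t) -> 0 < \sum_t q t * pi s t.
Proof.
move=> [_ [h01 [_ hex]]] hq; have [t0 ht0] := hex s.
rewrite (bigD1 t0) //=.
have h1 : 0 < q t0 * pi s t0 by apply: mulr_gt0.
have h2 : 0 <= \sum_(t | t != t0) q t * pi s t.
  apply: sumr_ge0 => t _; apply: mulr_ge0; first exact: ltW.
  by case/andP: (h01 s t).
lra.
Qed.

Lemma postvalE (S : finType) (q : T -> R) (pi : S -> T -> R) s a :
  post_val q pi s a = (\sum_t q t * pi s t * a t) / (\sum_t q t * pi s t).
Proof.
rewrite /post_val /posterior mulr_suml; apply: eq_bigr => t _.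
by rewrite mulrAC.
Qed.

Lemma WpayE (A : {fset {ffun T -> R}}) (p q : T -> R) (S : finType) (pi : S -> T -> R) :
  Wpay A p q pi = \sum_s (\sum_t p t * pi s t) * wage A q pi s.
Proof.
rewrite /Wpay.
under eq_bigr do rewrite mulr_sumr.
rewrite exchange_big /=; apply: eq_bigr => s _.
by rewrite mulr_suml; apply: eq_bigr => t _; rewrite mulrA.
Qed.

End Aux.
Local Open Scope fset_scope.

Theorem corollary2 (R : realType) (T : finType) (th : T -> R)
  (th_inj : injective th) (hT : (2 <= #|T|)%N)
  (p qI qJ : T -> R)
  (hp : full_support_dist p) (hqI : full_support_dist qI)
  (hqJ : full_support_dist qJ)
  (SI : finType) (slI : SI -> R) (piI : SI -> T -> R)
  (SJ : finType) (piJ : SJ -> T -> R)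
  (hsI : signal_structure piI) (hsJ : signal_structure piJ)
  (hMLR : MLR th slI piI)
  (hpqJ : LR_ge th p qJ)
  (hqIJ : LR_ge th qI qJ)
  (hG : garbling_ge piI piJ) :
  forall A : {fset {ffun T -> R}},
    A != fset0 ->
    (forall a, a \in A -> monotone_task th a) ->
    Wpay A p qI piI >= Wpay A p qJ piJ.
Proof.
Local Close Scope fset_scope.
move=> A hA hmon.
have [hp0 _] := hp; have [hqI0 _] := hqI; have [hqJ0 _] := hqJ.
have [slinj hmlr] := hMLR.
have [g [hg01 [hgs hpi]]] := hG.
have [_ [hI01 _]] := hsI.
have piI0 : forall s t, 0 <= piI s t by move=> s t; case/andP: (hI01 s t).
have g0 : forall s s', 0 <= g s s' by move=> s s'; case/andP: (hg01 s s').
have PI0 : forall s, 0 <= \sum_t p t * piI s t.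
  by move=> s; apply: sumr_ge0 => t _; apply: mulr_ge0 => //; apply: ltW.
have step1 : Wpay A p qJ piI <= Wpay A p qI piI.
  rewrite !WpayE; apply: ler_sum => s _; apply: ler_wpM2l => //.
  have [a ha ->] := wage_attain qJ piI s hA.
  apply: le_trans (wage_ge qI piI s ha).
  rewrite !postvalE.
  have := @ratio_le R T th th_inj (fun t => qJ t * piI s t) (fun t => qI t * piI s t) a.
  apply.
  - move=> t t' h /=.
    have -> : qI t * piI s t * (qJ t' * piI s t') = (piI s t * piI s t') * (qJ t' * qI t) by ring.
    have -> : qJ t * piI s t * (qI t' * piI s t') = (piI s t * piI s t') * (qJ t * qI t') by ring.
    by apply: ler_wpM2l; [apply: mulr_ge0 | apply: hqIJ].
  - by move=> t t' h; apply: ltW; apply: (hmon a ha).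
  - exact: den_pos.
  - exact: den_pos.
have hwmono : forall s1 s2, slI s1 < slI s2 -> wage A qJ piI s1 <= wage A qJ piI s2.
  move=> s1 s2 h12.
  have [a ha ->] := wage_attain qJ piI s1 hA.
  apply: le_trans (wage_ge qJ piI s2 ha).
  rewrite !postvalE.
  have := @ratio_le R T th th_inj (fun t => qJ t * piI s1 t) (fun t => qJ t * piI s2 t) a.
  apply.
  - move=> t t' h /=.
    have -> : qJ t * piI s2 t * (qJ t' * piI s1 t') = (qJ t * qJ t') * (piI s1 t' * piI s2 t) by ring.
    have -> : qJ t * piI s1 t * (qJ t' * piI s2 t') = (qJ t * qJ t') * (piI s1 t * piI s2 t') by ring.
    apply: ler_wpM2l; last exact: hmlr.
    by apply: mulr_ge0; apply: ltW.
  - by move=> t t' h; apply: ltW; apply: (hmon a ha).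
  - exact: den_pos.
  - exact: den_pos.
have hDP : forall s1 s2, slI s1 < slI s2 ->
    (\sum_t p t * piI s1 t) * (\sum_t qJ t * piI s2 t) <=
    (\sum_t qJ t * piI s1 t) * (\sum_t p t * piI s2 t).
  move=> s1 s2 h12; rewrite -subr_ge0.
  have := @symsum R T th th_inj (fun t t' => qJ t * piI s1 t * (p t' * piI s2 t')
        - p t * piI s1 t * (qJ t' * piI s2 t')).
  rewrite !big_distrlr /= -sumrB.
  under [X in _ -> _ <= X]eq_bigr => t _ do rewrite -sumrB.
  apply.
  - by move=> t; rewrite subr_ge0 le_eqVlt; apply/orP; left; apply/eqP; ring.
  - move=> t t' h.
    have -> : qJ t * piI s1 t * (p t' * piI s2 t') - p t * piI s1 t * (qJ t' * piI s2 t') +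
      (qJ t' * piI s1 t' * (p t * piI s2 t) - p t' * piI s1 t' * (qJ t * piI s2 t)) =
      (piI s1 t * piI s2 t' - piI s1 t' * piI s2 t) * (qJ t * p t' - qJ t' * p t) by ring.
    by apply: mulr_ge0; rewrite subr_ge0; [apply: hmlr | apply: hpqJ].
have Eh3 : forall (h c : T -> R) s, \sum_t h t * piJ s t * c t =
    \sum_s' g s s' * \sum_t h t * piI s' t * c t.
  move=> h c s.
  under eq_bigr => t _ do rewrite hpi mulr_sumr mulr_suml.
  rewrite exchange_big /=; apply: eq_bigr => s' _; rewrite mulr_sumr.
  by apply: eq_bigr => t _; ring.
have Eh : forall (h : T -> R) s, \sum_t h t * piJ s t =
    \sum_s' g s s' * \sum_t h t * piI s' t.
  move=> h s; have := Eh3 h (fun _ => 1) s.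
  under eq_bigr do rewrite mulr1.
  by under [X in _ = X -> _]eq_bigr => s' _ do under eq_bigr do rewrite mulr1.
have step2 : Wpay A p qJ piJ <= Wpay A p qJ piI.
  rewrite !WpayE.
  have -> : \sum_s' (\sum_t p t * piI s' t) * wage A qJ piI s' =
     \sum_s \sum_s' g s s' * ((\sum_t p t * piI s' t) * wage A qJ piI s').
    rewrite exchange_big /=; apply: eq_bigr => s' _.
    by rewrite -mulr_suml hgs mul1r.
  apply: ler_sum => s _.
  have [a ha ->] := wage_attain qJ piJ s hA.
  rewrite postvalE (Eh p s) (Eh qJ s) (Eh3 qJ a s).
  have hD : 0 < \sum_s' g s s' * \sum_t qJ t * piI s' t.
    by rewrite -Eh; apply: den_pos.
  have hN : \sum_s' g s s' * (\sum_t qJ t * piI s' t * a t) <=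
      \sum_s' (g s s' * \sum_t qJ t * piI s' t) * wage A qJ piI s'.
    apply: ler_sum => s' _; rewrite -mulrA; apply: ler_wpM2l => //.
    have := wage_ge qJ piI s' ha; rewrite postvalE ler_pdivrMr; last exact: den_pos.
    by rewrite mulrC.
  have hLR := @LR_sum R SI slI slinj (fun s' => g s s' * \sum_t qJ t * piI s' t)
     (fun s' => g s s' * \sum_t p t * piI s' t) (fun s' => wage A qJ piI s').
  rewrite mulrA ler_pdivrMr //.
  apply: le_trans (_ : (\sum_s' g s s' * \sum_t p t * piI s' t) *
      (\sum_s' (g s s' * \sum_t qJ t * piI s' t) * wage A qJ piI s') <= _).
    by apply: ler_wpM2l => //; apply: sumr_ge0 => s' _; apply: mulr_ge0.
  rewrite [X in _ <= X]mulrC.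
  under [X in _ <= _ * X]eq_bigr => s' _ do rewrite mulrA.
  apply: hLR.
  - move=> s1 s2 h12 /=.
    have -> : g s s1 * (\sum_t p t * piI s1 t) * (g s s2 * (\sum_t qJ t * piI s2 t)) =
      (g s s1 * g s s2) * ((\sum_t p t * piI s1 t) * (\sum_t qJ t * piI s2 t)) by ring.
    have -> : g s s1 * (\sum_t qJ t * piI s1 t) * (g s s2 * (\sum_t p t * piI s2 t)) =
      (g s s1 * g s s2) * ((\sum_t qJ t * piI s1 t) * (\sum_t p t * piI s2 t)) by ring.
    by apply: ler_wpM2l; [apply: mulr_ge0 | apply: hDP].
  - exact: hwmono.
exact: le_trans step2 step1.
Qed.
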